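(* Let $\mathcal{Z}\subset[0,1]$ be finite, let $\ell:[0,1]\times\{0,1\}\to\mathbb{R}$ be a proper loss, and let $\sigma:[0,1]\to[0,1]$ be any swap function. Then for every run of the forecasting protocol (predictions $p_t\in\mathcal{Z}$ drawn from $\mathcal{P}_t$, labels $y_t\in\{0,1\}$), $$\mathsf{SReg}^{\ell}_{\sigma}=\sum_{p\in\mathcal{Z}}\Big(\sum_{t=1}^T \mathbb{1}\{p_t=p\}\Big)\big(\mathsf{BREG}_{-\ell}(\rho_p,p)-\mathsf{BREG}_{-\ell}(\rho_p,\sigma(p))\big),$$ $$\mathsf{PSReg}^{\ell}_{\sigma}=\sum_{p\in\mathcal{Z}}\Big(\sum_{t=1}^T \mathcal{P}_t(p)\Big)\big(\mathsf{BREG}_{-\ell}(\tilde\rho_p,p)-\mathsf{BREG}_{-\ell}(\tilde\rho_p,\sigma(p))\big).$$ Furthermore, $$\mathsf{SReg}^{\ell}=\sum_{p\in\mathcal{Z}}\sum_{t=1}^T \mathbb{1}\{p_t=p\}\,\mathsf{BREG}_{-\ell}(\rho_p,p),\qquad \mathsf{PSReg}^{\ell}=\sum_{p\in\mathcal{Z}}\sum_{t=1}^T \mathcal{P}_t(p)\,\mathsf{BREG}_{-\ell}(\tilde\rho_p,p).$$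
   Context: Forecasting protocol: for $t=1,\dots,T$, the forecaster chooses a distribution $\mathcal{P}_t$ over a finite set $\mathcal{Z}\subset[0,1]$ (possibly depending on the past), draws a prediction $p_t\sim\mathcal{P}_t$, and simultaneously the adversary chooses $y_t\in\{0,1\}$, which is then revealed. Define $\rho_p=\frac{\sum_t y_t\mathbb{1}\{p_t=p\}}{\sum_t\mathbb{1}\{p_t=p\}}$ and $\tilde\rho_p=\frac{\sum_t y_t\mathcal{P}_t(p)}{\sum_t\mathcal{P}_t(p)}$, with the convention $0/0=0$. A loss $\ell:[0,1]\times\{0,1\}\to\mathbb{R}$ is proper if $\mathbb{E}_{y\sim \mathrm{Ber}(p)}[\ell(p,y)]\le\mathbb{E}_{y\sim\mathrm{Ber}(p)}[\ell(p',y)]$ for all $p,p'\in[0,1]$. Its univariate form is $\ell(p):=p\,\ell(p,1)+(1-p)\,\ell(p,0)$ (a concave function), and a proper loss satisfies $\ell(p,y)=\ell(p)+g_p(y-p)$ with $g_p:=\ell(p,1)-\ell(p,0)$ a supergradient of the univariate form at $p$. The Bregman divergence of $-\ell$ is $\mathsf{BREG}_{-\ell}(x,y):=\ell(y)-\ell(x)+g_y(x-y)$. For a swap function $\sigma$, $\mathsf{SReg}^\ell_\sigma:=\sum_{t=1}^T\big(\ell(p_t,y_t)-\ell(\sigma(p_t),y_t)\big)$ and $\mathsf{PSReg}^\ell_\sigma:=\sum_{p\in\mathcal{Z}}\sum_{t=1}^T\mathcal{P}_t(p)\big(\ell(p,y_t)-\ell(\sigma(p),y_t)\big)$; swap regret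 $\mathsf{SReg}^\ell:=\sup_{\sigma:[0,1]\to[0,1]}\mathsf{SReg}^\ell_\sigma$ and pseudo swap regret $\mathsf{PSReg}^\ell:=\sup_{\sigma:[0,1]\to[0,1]}\mathsf{PSReg}^\ell_\sigma$. *)

(* Defs.v *)
From HB Require Import structures.
From mathcomp Require Import all_boot all_order all_algebra.
From mathcomp Require Import all_classical all_reals.
Set Implicit Arguments. Unset Strict Implicit. Unset Printing Implicit Defensive.
Import Order.TTheory GRing.Theory Num.Theory.
Local Open Scope ring_scope.
Local Open Scope classical_set_scope.

Section Defs.
Variable R : realType.

(* A loss ell : [0,1] x {0,1} -> R; labels are booleans (true = 1, false = 0). *)
Definition loss := R -> bool -> R.

Definition univ (ell : loss) (p : R) : R :=
  p * ell p true + (1 - p) * ell p false.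

Definition gl (ell : loss) (p : R) : R := ell p true - ell p false.

Definition proper_loss (ell : loss) : Prop :=
  forall p p' : R, p \in `[0, 1] -> p' \in `[0, 1] ->
    p * ell p true + (1 - p) * ell p false <=
    p * ell p' true + (1 - p) * ell p' false.

Definition BREG (ell : loss) (x y : R) : R :=
  univ ell y - univ ell x + gl ell y * (x - y).

Definition swap_fun (sigma : R -> R) : Prop :=
  forall x : R, x \in `[0, 1] -> sigma x \in `[0, 1].

Variable T : nat.

(* rho_p, with 0/0 = 0 (MathComp's convention x / 0 = 0) *)
Definition rho (pr : 'I_T -> R) (y : 'I_T -> bool) (q : R) : R :=
  (\sum_(t < T) (y t)%:R * (pr t == q)%:R) / (\sum_(t < T) (pr t == q)%:R).

Definition rhot (P : 'I_T -> R -> R) (y : 'I_T -> bool) (q : R) : R :=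
  (\sum_(t < T) (y t)%:R * P t q) / (\sum_(t < T) P t q).

Definition SReg_sigma (ell : loss) (pr : 'I_T -> R) (y : 'I_T -> bool)
    (sigma : R -> R) : R :=
  \sum_(t < T) (ell (pr t) (y t) - ell (sigma (pr t)) (y t)).

Definition PSReg_sigma (Z : seq R) (ell : loss) (P : 'I_T -> R -> R)
    (y : 'I_T -> bool) (sigma : R -> R) : R :=
  \sum_(q <- Z) \sum_(t < T) P t q * (ell q (y t) - ell (sigma q) (y t)).

Definition SReg (ell : loss) (pr : 'I_T -> R) (y : 'I_T -> bool) : R :=
  sup [set SReg_sigma ell pr y sigma | sigma in swap_fun].

Definition PSReg (Z : seq R) (ell : loss) (P : 'I_T -> R -> R)
    (y : 'I_T -> bool) : R :=
  sup [set PSReg_sigma Z ell P y sigma | sigma in swap_fun].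

End Defs.

(* Main.v *)
Require Import Defs.
From HB Require Import structures.
From mathcomp Require Import all_boot all_order all_algebra.
From mathcomp Require Import all_classical all_reals.
From mathcomp Require Import ring lra.
Import Order.TTheory GRing.Theory Num.Theory.
Local Open Scope ring_scope.

Section Aux.
Variable R : realType.
Variable ell : loss R.
Variable T : nat.
Variable y : 'I_T -> bool.

Lemma key (w : 'I_T -> R) (q s r : R) :
  \sum_(t < T) (y t)%:R * w t = (\sum_(t < T) w t) * r ->
  \sum_(t < T) w t * (ell q (y t) - ell s (y t)) =
  (\sum_(t < T) w t) * (BREG ell r q - BREG ell r s).
Proof.
move=> HS.
pose A := univ ell q - univ ell s - gl ell q * q + gl ell s * s.
pose B := gl ell q - gl ell s.
transitivity (\sum_(t < T) (w t * A + ((y t)%:R * w t) * B)).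
  by apply: eq_bigr => t _; rewrite /A /B /univ /gl; case: (y t) => /=; ring.
rewrite big_split /= -!big_distrl /= HS /A /B /BREG; ring.
Qed.

Lemma rfrac (w : 'I_T -> R) : (forall t, 0 <= w t) ->
  \sum_(t < T) (y t)%:R * w t =
    (\sum_(t < T) w t) * ((\sum_(t < T) (y t)%:R * w t) / \sum_(t < T) w t)
  /\ (\sum_(t < T) (y t)%:R * w t) / \sum_(t < T) w t \in `[0, 1].
Proof.
move=> w0.
have S0 : 0 <= \sum_(t < T) (y t)%:R * w t.
  by apply: sumr_ge0 => t _; apply: mulr_ge0 => //; case: (y t).
have SW : \sum_(t < T) (y t)%:R * w t <= \sum_(t < T) w t.
  by apply: ler_sum => t _; case: (y t); rewrite /= ?mul1r ?mul0r.
have W0 : 0 <= \sum_(t < T) w t by apply: sumr_ge0.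
have [Wz|Wnz] := eqVneq (\sum_(t < T) w t) 0.
  rewrite Wz invr0 mulr0 mul0r; split.
    by move: SW; rewrite Wz => SW; lra.
  by rewrite in_itv /= lexx ler01.
have Wp : 0 < \sum_(t < T) w t by rewrite lt_neqAle eq_sym Wnz W0.
split; first by rewrite mulrC divfK.
rewrite in_itv /= divr_ge0 //= ler_pdivrMr // mul1r //.
Qed.

Lemma itvC (x : R) : (x \in `[0, 1]) = (x \in `[0, 1]%classic).
Proof. apply/idP/idP; rewrite in_setE //=. Qed.

Lemma breg_ge0 (r s : R) : proper_loss ell -> r \in `[0, 1] -> s \in `[0, 1] ->
  0 <= BREG ell r s.
Proof.
move=> Hp Hr Hs; have := Hp r s; rewrite -!itvC => /(_ Hr Hs).
have -> : BREG ell r s = (r * ell s true + (1 - r) * ell s false) -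
   (r * ell r true + (1 - r) * ell r false) by rewrite /BREG /univ /gl; ring.
by rewrite subr_ge0.
Qed.

Lemma breg_xx (r : R) : BREG ell r r = 0.
Proof. rewrite /BREG; ring. Qed.

End Aux.

Theorem proposition1 (R : realType) (Z : seq R) (ell : loss R)
    (T : nat) (P : 'I_T -> R -> R) (pr : 'I_T -> R) (y : 'I_T -> bool)
    (sigma : R -> R) :
  uniq Z ->
  (forall q, q \in Z -> q \in `[0, 1]) ->
  proper_loss ell ->
  swap_fun sigma ->
  (forall t q, q \in Z -> 0 <= P t q) ->
  (forall t, \sum_(q <- Z) P t q = 1) ->
  (forall t, pr t \in Z) ->
  (forall t, 0 < P t (pr t)) ->
  [/\ SReg_sigma ell pr y sigma =
        \sum_(q <- Z) (\sum_(t < T) (pr t == q)%:R) *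
          (BREG ell (rho pr y q) q - BREG ell (rho pr y q) (sigma q)),
      PSReg_sigma Z ell P y sigma =
        \sum_(q <- Z) (\sum_(t < T) P t q) *
          (BREG ell (rhot P y q) q - BREG ell (rhot P y q) (sigma q)),
      SReg ell pr y =
        \sum_(q <- Z) \sum_(t < T) (pr t == q)%:R * BREG ell (rho pr y q) q
    & PSReg Z ell P y =
        \sum_(q <- Z) \sum_(t < T) P t q * BREG ell (rhot P y q) q].
Proof.
move=> uZ Z01 Hp Hs P0 _ prZ _.
have ind0 : forall q t, 0 <= ((pr t == q)%:R : R) by move=> q t; case: (_ == _).
have S1 : forall sg, SReg_sigma ell pr y sg =
        \sum_(q <- Z) (\sum_(t < T) (pr t == q)%:R) *
          (BREG ell (rho pr y q) q - BREG ell (rho pr y q) (sg q)).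
  move=> sg; rewrite /SReg_sigma.
  transitivity (\sum_(q <- Z) \sum_(t < T) (pr t == q)%:R *
                 (ell q (y t) - ell (sg q) (y t))).
    rewrite exchange_big /=; apply: eq_bigr => t _.
    transitivity (\sum_(q <- Z | q == pr t)
                   (ell (pr t) (y t) - ell (sg (pr t)) (y t))).
      by rewrite -big_filter filter_pred1_uniq // big_seq1.
    rewrite big_mkcond /=; apply: eq_bigr => q _.
    by rewrite eq_sym; case: eqP => [<-|_]; rewrite ?mul1r ?mul0r.
  apply: eq_bigr => q _; apply: key.
  by case: (@rfrac _ _ y _ (ind0 q)).
have S2 : forall sg, PSReg_sigma Z ell P y sg =
        \sum_(q <- Z) (\sum_(t < T) P t q) *
          (BREG ell (rhot P y q) q - BREG ell (rhot P y q) (sg q)).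
  move=> sg; rewrite /PSReg_sigma; apply: eq_big_seq => q qZ; apply: key.
  by case: (@rfrac _ _ y _ (fun t => P0 t q qZ)).
split; [exact: S1|exact: S2| |].
- set M := \sum_(q <- Z) _.
  have MS : M = SReg_sigma ell pr y (rho pr y).
    rewrite S1 /M; apply: eq_bigr => q _; rewrite breg_xx subr0 big_distrl //.
  have ub : forall sg, swap_fun sg -> SReg_sigma ell pr y sg <= M.
    move=> sg Hsg; rewrite S1 /M big_seq [X in _ <= X]big_seq.
    apply: ler_sum => q qZ; rewrite -big_distrl /=.
    have n0 : 0 <= \sum_(t < T) ((pr t == q)%:R : R) by apply: sumr_ge0.
    have b0 : 0 <= BREG ell (rho pr y q) (sg q).
      apply: breg_ge0 => //; first by case: (@rfrac _ _ y _ (ind0 q)).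
      rewrite itvC; apply: Hsg; rewrite -itvC; exact: Z01.
    nra.
  rewrite /SReg; set E := (X in sup X).
  have inS : E M.
    exists (rho pr y); last by rewrite MS.
    move=> x _; rewrite -itvC; by case: (@rfrac _ _ y _ (ind0 x)).
  have ubM : ubound E M by move=> _ [sg Hsg <-]; exact: ub.
  apply/eqP; rewrite eq_le ge_sup //=; last by exists M.
  by apply: ub_le_sup => //; exists M.
- set M := \sum_(q <- Z) _.
  pose sg0 := fun x => if x \in Z then rhot P y x else x.
  have MS : M = PSReg_sigma Z ell P y sg0.
    rewrite S2 /M; apply: eq_big_seq => q qZ.
    by rewrite /sg0 qZ breg_xx subr0 big_distrl.
  have ub : forall sg, swap_fun sg -> PSReg_sigma Z ell P y sg <= M.
    move=> sg Hsg; rewrite S2 /M big_seq [X in _ <= X]big_seq.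
    apply: ler_sum => q qZ; rewrite -big_distrl /=.
    have n0 : 0 <= \sum_(t < T) P t q by apply: sumr_ge0 => t _; exact: P0.
    have b0 : 0 <= BREG ell (rhot P y q) (sg q).
      apply: breg_ge0 => //; first by case: (@rfrac _ _ y _ (fun t => P0 t q qZ)).
      rewrite itvC; apply: Hsg; rewrite -itvC; exact: Z01.
    nra.
  rewrite /PSReg; set E := (X in sup X).
  have inS : E M.
    exists sg0; last by rewrite MS.
    move=> x; rewrite /sg0; case: ifP => // xZ _; rewrite -itvC.
    by case: (@rfrac _ _ y _ (fun t => P0 t x xZ)).
  have ubM : ubound E M by move=> _ [sg Hsg <-]; exact: ub.
  apply/eqP; rewrite eq_le ge_sup //=; last by exists M.
  by apply: ub_le_sup => //; exists M.
Qed.
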